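(* Let $Q$ be an inverse semigroup and let $b,c,u,v\in Q$ with $u\,\mathcal{R}\,v$. Then $bc^{-1}=u^{-1}v$ if and only if \[ub=vc,\qquad v\,\mathcal{R}\,vc,\qquad L_b\wedge L_c=L_{ub},\] where $\wedge$ is the meet in the semilattice $Q/\mathcal{L}$.
   Context: $a^{-1}$ denotes the unique inverse of $a$ in $Q$; $\mathcal{R},\mathcal{L}$ are Green's relations of $Q$ and $L_a$ the $\mathcal{L}$-class of $a$. The set $Q/\mathcal{L}$ is partially ordered by $L_a\leq L_b$ iff $Q^1a\subseteq Q^1b$; it is a meet semilattice, with $L_a\wedge L_b=L_c$ iff $c^{-1}c=a^{-1}ab^{-1}b$. *)

(* Defs.v *)
Record InverseSemigroup := {
  carrier :> Type;
  mul : carrier -> carrier -> carrier;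
  inv : carrier -> carrier;
  mulA : forall a b c, mul a (mul b c) = mul (mul a b) c;
  inv_regular : forall a, mul (mul a (inv a)) a = a;
  inv_inv_regular : forall a, mul (mul (inv a) a) (inv a) = inv a;
  inv_unique : forall a b, mul (mul a b) a = a -> mul (mul b a) b = b -> b = inv a
}.

Arguments mul {_} _ _.
Arguments inv {_} _.

Section Green.
Variable Q : InverseSemigroup.

(* y ∈ a Q^1 *)
Definition in_rideal1 (a y : Q) : Prop := y = a \/ exists x : Q, y = mul a x.
(* y ∈ Q^1 a *)
Definition in_lideal1 (a y : Q) : Prop := y = a \/ exists x : Q, y = mul x a.

Definition greenR (a b : Q) : Prop := forall y, in_rideal1 a y <-> in_rideal1 b y.
Definition greenL (a b : Q) : Prop := forall y, in_lideal1 a y <-> in_lideal1 b y.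

Definition leL (a b : Q) : Prop := forall y, in_lideal1 a y -> in_lideal1 b y.

Definition is_meetL (a b d : Q) : Prop :=
  leL d a /\ leL d b /\ (forall e, leL e a -> leL e b -> leL e d).
End Green.

Arguments greenR {_} _ _.
Arguments greenL {_} _ _.
Arguments leL {_} _ _.
Arguments is_meetL {_} _ _ _.

(* Main.v *)
Require Import Defs.
From Stdlib Require Import Setoid.

Section S.
Variable Q : InverseSemigroup.
Local Infix "**" := (@mul Q) (at level 40, left associativity).
Local Notation i := (@inv Q).

Ltac AC := repeat rewrite mulA; reflexivity.
Ltac rgp t := transitivity t; [repeat rewrite mulA; reflexivity|].

Lemma inv_inv (a : Q) : i (i a) = a.
Proof. symmetry; apply inv_unique; [apply inv_inv_regular | apply inv_regular]. Qed.

Lemma inv_idem (e : Q) : e ** e = e -> i e = e.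
Proof. intro he. symmetry; apply inv_unique; rewrite he; exact he. Qed.

Lemma idem_mul (e f : Q) : e ** e = e -> f ** f = f -> (e ** f) ** (e ** f) = e ** f.
Proof.
  intros he hf.
  set (x := i (e ** f)).
  assert (Hx : f ** x ** e = x).
  { apply inv_unique.
    - rgp (e ** (f ** f) ** x ** (e ** e) ** f). rewrite he, hf.
      rgp ((e ** f) ** x ** (e ** f)). apply inv_regular.
    - rgp (f ** (x ** (e ** e) ** (f ** f) ** x) ** e). rewrite he, hf.
      rgp (f ** (x ** (e ** f) ** x) ** e). unfold x; rewrite inv_inv_regular. reflexivity. }
  assert (hxe : x ** e = x).
  { rewrite <- Hx at 1. rgp (f ** x ** (e ** e)). rewrite he. exact Hx. }
  assert (hfx : f ** x = x).
  { rewrite <- Hx at 1. rgp ((f ** f) ** x ** e). rewrite hf. exact Hx. }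
  assert (hxx : x ** x = x).
  { transitivity ((x ** (e ** f)) ** x); [| apply inv_inv_regular].
    symmetry. rgp ((x ** e) ** (f ** x)). rewrite hxe, hfx. reflexivity. }
  assert (hef : e ** f = x).
  { transitivity (i x); [symmetry; apply inv_inv | apply inv_idem; exact hxx]. }
  rewrite hef; exact hxx.
Qed.

Lemma idem_comm (e f : Q) : e ** e = e -> f ** f = f -> e ** f = f ** e.
Proof.
  intros he hf.
  pose proof (idem_mul e f he hf) as h1.
  pose proof (idem_mul f e hf he) as h2.
  rewrite <- (inv_idem (e ** f) h1). symmetry. apply inv_unique.
  - rgp (e ** (f ** f) ** (e ** e) ** f). rewrite he, hf. rgp ((e ** f) ** (e ** f)). exact h1.
  - rgp (f ** (e ** e) ** (f ** f) ** e). rewrite he, hf. rgp ((f ** e) ** (f ** e)). exact h2.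
Qed.

Lemma idem_r (a : Q) : (a ** i a) ** (a ** i a) = a ** i a.
Proof. rgp ((a ** i a ** a) ** i a). rewrite inv_regular. reflexivity. Qed.
Lemma idem_l (a : Q) : (i a ** a) ** (i a ** a) = i a ** a.
Proof. rgp ((i a ** a ** i a) ** a). rewrite inv_inv_regular. reflexivity. Qed.

Lemma reg_r (a : Q) : a ** (i a ** a) = a.
Proof. rewrite mulA; apply inv_regular. Qed.

Lemma inv_mul (a b : Q) : i (a ** b) = i b ** i a.
Proof.
  symmetry; apply inv_unique.
  - rgp (a ** ((b ** i b) ** (i a ** a)) ** b).
    rewrite (idem_comm _ _ (idem_r b) (idem_l a)).
    rgp ((a ** i a ** a) ** (b ** i b ** b)). rewrite !inv_regular. reflexivity.
  - rgp (i b ** ((i a ** a) ** (b ** i b)) ** i a).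
    rewrite (idem_comm _ _ (idem_l a) (idem_r b)).
    rgp ((i b ** b ** i b) ** (i a ** a ** i a)). rewrite !inv_inv_regular. reflexivity.
Qed.

Lemma RR (a b : Q) : greenR a b <-> a ** i a = b ** i b.
Proof.
  split.
  - intro H.
    assert (ha : b ** i b ** a = a).
    { destruct (proj1 (H a) (or_introl eq_refl)) as [E | [x E]].
      - rewrite E. apply inv_regular.
      - rewrite E. rgp ((b ** i b ** b) ** x). rewrite inv_regular. reflexivity. }
    assert (hb : a ** i a ** b = b).
    { destruct (proj2 (H b) (or_introl eq_refl)) as [E | [x E]].
      - rewrite E. apply inv_regular.
      - rewrite E. rgp ((a ** i a ** a) ** x). rewrite inv_regular. reflexivity. }
    transitivity ((b ** i b) ** (a ** i a)).
    + symmetry. rgp ((b ** i b ** a) ** i a). rewrite ha. reflexivity.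
    + rewrite <- (idem_comm _ _ (idem_r a) (idem_r b)).
      rgp ((a ** i a ** b) ** i b). rewrite hb. reflexivity.
  - intros E.
    assert (ga : a = b ** (i b ** a)).
    { rewrite mulA, <- E. symmetry; apply inv_regular. }
    assert (gb : b = a ** (i a ** b)).
    { rewrite mulA, E. symmetry; apply inv_regular. }
    intro y; split; intros [-> | [x ->]]; right.
    + exists (i b ** a). exact ga.
    + exists (i b ** a ** x). rewrite ga at 1. AC.
    + exists (i a ** b). exact gb.
    + exists (i a ** b ** x). rewrite gb at 1. AC.
Qed.

Lemma LL (a b : Q) : leL a b <-> a = a ** (i b ** b).
Proof.
  split.
  - intro H. destruct (H a (or_introl eq_refl)) as [E | [x E]].
    + rewrite E. symmetry. apply reg_r.
    + rewrite E. symmetry. rgp (x ** (b ** i b ** b)). rewrite inv_regular. reflexivity.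
  - intros E y [-> | [x ->]]; right.
    + exists (a ** i b). rewrite E at 1. AC.
    + exists (x ** a ** i b). rewrite E at 1. AC.
Qed.

Lemma absorb (e f : Q) : e ** e = e -> f ** f = f ->
  (e ** f) ** e = e ** f /\ (e ** f) ** f = e ** f.
Proof.
  intros he hf. split.
  - rewrite (idem_comm e f he hf). rgp (f ** (e ** e)). rewrite he. reflexivity.
  - rgp (e ** (f ** f)). rewrite hf. reflexivity.
Qed.

Lemma Meet (b c d : Q) : is_meetL b c d <-> i d ** d = (i b ** b) ** (i c ** c).
Proof.
  pose proof (idem_l b) as he. pose proof (idem_l c) as hf. pose proof (idem_l d) as hg.
  pose proof (idem_mul _ _ he hf) as hef.
  destruct (absorb _ _ he hf) as [a1 a2].
  split.
  - intros [H1 [H2 H3]].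
    apply LL in H1. apply LL in H2.
    assert (E1 : i d ** d = (i d ** d) ** ((i b ** b) ** (i c ** c))).
    { symmetry. rgp (i d ** (d ** (i b ** b)) ** (i c ** c)). rewrite <- H1.
      rgp (i d ** (d ** (i c ** c))). rewrite <- H2. reflexivity. }
    assert (E2 : leL ((i b ** b) ** (i c ** c)) d).
    { apply H3; apply LL; symmetry; assumption. }
    apply LL in E2.
    rewrite E1, (idem_comm _ _ hg hef). symmetry. exact E2.
  - intro E.
    assert (K : forall x, x = x ** (i b ** b) -> x = x ** (i c ** c) -> x = x ** (i d ** d)).
    { intros x h1 h2. rewrite E. symmetry. rgp ((x ** (i b ** b)) ** (i c ** c)).
      rewrite <- h1. symmetry. exact h2. }
    assert (Hb : d = d ** (i b ** b)).
    { symmetry. rewrite <- (reg_r d) at 1. rewrite E. rgp (d ** ((i b ** b) ** (i c ** c) ** (i b ** b))).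
      rewrite a1, <- E. apply reg_r. }
    assert (Hc : d = d ** (i c ** c)).
    { symmetry. rewrite <- (reg_r d) at 1. rewrite E. rgp (d ** ((i b ** b) ** (i c ** c) ** (i c ** c))).
      rewrite a2, <- E. apply reg_r. }
    split; [apply LL; exact Hb | split; [apply LL; exact Hc |]].
    intros x h1 h2. apply LL in h1. apply LL in h2. apply LL. apply K; assumption.
Qed.

Lemma main (b c u v : Q) (huv : greenR u v) : b ** i c = i u ** v <->
  (u ** b = v ** c /\ greenR v (v ** c) /\ is_meetL b c (u ** b)).
Proof.
  apply RR in huv.
  pose proof (idem_l b) as he. pose proof (idem_l c) as hf.
  split.
  - intro H.
    assert (hv : u ** b ** i c = v).
    { rgp (u ** (b ** i c)). rewrite H. rgp ((u ** i u) ** v). rewrite huv. apply inv_regular. }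
    assert (hbfb : b ** i c ** (c ** i b) = i u ** u).
    { assert (K : (b ** i c) ** i (b ** i c) = i u ** u).
      { rewrite H, inv_mul, inv_inv. rgp (i u ** (v ** i v) ** u). rewrite <- huv.
        rgp ((i u ** u ** i u) ** u). rewrite inv_inv_regular. reflexivity. }
      rewrite inv_mul, inv_inv in K. exact K. }
    assert (hub : u ** b = v ** c).
    { transitivity (u ** (i u ** u) ** b); [rewrite reg_r; reflexivity|].
      rewrite <- hbfb. rgp (u ** b ** ((i c ** c) ** (i b ** b))).
      rewrite (idem_comm _ _ hf he).
      rgp (u ** (b ** i b ** b) ** i c ** c). rewrite inv_regular, hv. reflexivity. }
    split; [exact hub | split].
    + apply RR. rewrite inv_mul.
      assert (hvc : v ** c ** i c = v).
      { rewrite <- hv. rgp (u ** b ** (i c ** c ** i c)). rewrite inv_inv_regular. reflexivity. }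
      symmetry. rgp ((v ** c ** i c) ** i v). rewrite hvc. reflexivity.
    + apply Meet. rewrite inv_mul. rgp (i b ** (i u ** u) ** b). rewrite <- hbfb.
      rgp ((i b ** b) ** (i c ** c) ** (i b ** b)). apply (absorb _ _ he hf).
  - intros [h1 [h2 h3]]. apply RR in h2. apply Meet in h3. rewrite inv_mul in h2, h3.
    assert (hv : v = u ** b ** i c).
    { transitivity (v ** c ** i c).
      + rewrite <- (inv_regular _ v) at 1. rewrite h2.
        rgp (v ** ((c ** i c) ** (i v ** v))).
        rewrite (idem_comm _ _ (idem_r c) (idem_l v)).
        rgp ((v ** i v ** v) ** c ** i c). rewrite inv_regular. reflexivity.
      + rewrite <- h1. reflexivity. }
    assert (hub : i u ** u ** b = b ** (i c ** c)).
    { rewrite <- (inv_regular _ b) at 1. rgp ((i u ** u) ** (b ** i b) ** b).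
      rewrite (idem_comm _ _ (idem_l u) (idem_r b)).
      rgp (b ** (i b ** i u ** (u ** b))). rewrite h3.
      rgp ((b ** i b ** b) ** i c ** c). rewrite inv_regular. AC. }
    rewrite hv. symmetry. rgp (i u ** u ** b ** i c). rewrite hub.
    rgp (b ** (i c ** c ** i c)). rewrite inv_inv_regular. reflexivity.
Qed.

End S.

Theorem lemma3p6 (Q : InverseSemigroup) (b c u v : Q) (huv : greenR u v) :
  mul b (inv c) = mul (inv u) v <->
  (mul u b = mul v c /\ greenR v (mul v c) /\ is_meetL b c (mul u b)).
Proof. exact (main Q b c u v huv). Qed.
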